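(* Let $\mathbf m>0$ be a real number, $\Gamma_1,\Gamma_2$ co-prime integers with $1<\Gamma_1<\Gamma_2$, $\mathbf m_i=\mathbf m\Gamma_i$ ($i=1,2$), let $1\le j\le K+1$ and $\mathbf X=\min\big(\mathbf m_2(1+\ddot n_{2,j}),\,\mathbf m_1(1+\ddot n_{1,j})\big)$. (a) For every real $\mathbf N$ with $0\le\mathbf N<\mathbf X$ and all real erroneous remainders $\tilde{\mathbf r}_1,\tilde{\mathbf r}_2$ of $\mathbf N$ whose errors satisfy $$-\frac{\sigma_j}{2}\le\frac{\Delta\mathbf r_1-\Delta\mathbf r_2}{\mathbf m}<\frac{\sigma_j}{2},$$ Algorithm 2 (real version, index $j$) returns $\hat n_1=n_1$, $\hat n_2=n_2$. In particular this holds whenever $|\Delta\mathbf r_i|\le\boldsymbol\tau$ for $i=1,2$ with $\boldsymbol\tau<\mathbf m\sigma_j/4$. (b) (Sharpness) For $\mathbf N=\mathbf X$ there exist real erroneous remainders whose errors satisfy the condition in (a), for which Algorithm 2 returns $(\hat n_1,\hat n_2)\ne(n_1,n_2)$.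
   Context: $|a|_b$ is the remainder of the integer $a$ modulo the positive integer $b$; $[x]=\lfloor x+1/2\rfloor$. For real $\mathbf N\ge0$: folding integers $n_i=\lfloor\mathbf N/\mathbf m_i\rfloor$ and real remainders $\mathbf r_i=\mathbf N-n_i\mathbf m_i\in[0,\mathbf m_i)$; erroneous remainders are reals $\tilde{\mathbf r}_i\in[0,\mathbf m_i)$ with errors $\Delta\mathbf r_i=\tilde{\mathbf r}_i-\mathbf r_i$. Euclidean sequence: $\sigma_{-1}=\Gamma_2$, $\sigma_0=\Gamma_1$, $\sigma_i=|\sigma_{i-2}|_{\sigma_{i-1}}$ for $i\ge1$; $K\ge0$ is the index with $\sigma_K>1$, $\sigma_{K+1}=1$. For $1\le n<\Gamma_1$, $S_{2,n}=\{|t\Gamma_2|_{\Gamma_1}:0\le t\le n\}$, $d_{2,n}$ = minimum distance between distinct elements of $S_{2,n}$; for $1\le n<\Gamma_2$, $S_{1,n}=\{|t\Gamma_1|_{\Gamma_2}:0\le t\le n\}$, $d_{1,n}$ likewise. $\ddot n_{2,j}=\max\{n:1\le n<\Gamma_1,\ d_{2,n}\ge\sigma_j\}$, $\ddot n_{1,j}=\max\{n:1\le n<\Gamma_2,\ d_{1,n}\ge\sigma_j\}$. $\bar\Gamma_{21}$ is the inverse of $\Gamma_2$ modulo $\Gamma_1$, $\bar\Gamma_{12}$ the inverse of $\Gamma_1$ modulo $\Gamma_2$. Algorithm 2, real version (index $j$, input $\tilde{\mathbf r}_1,\tilde{\mathbf r}_2$): compute $\mathbf q_{21}=(\tilde{\mathbf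 r}_1-\tilde{\mathbf r}_2)/\mathbf m$. (i) If $\mathbf q_{21}\ge\sigma_j/2$: if some $x\in S_{2,\ddot n_{2,j}}$ satisfies $-\sigma_j/2\le\mathbf q_{21}-x<\sigma_j/2$, let $s_2=x$; otherwise let $s_2$ be an element of $S_{2,\ddot n_{2,j}}$ at minimum distance from $\mathbf q_{21}$. Let $\hat n_2\in[0,\Gamma_1)$ with $\hat n_2\equiv s_2\bar\Gamma_{21}\pmod{\Gamma_1}$ and $\hat n_1=[(\hat n_2\mathbf m_2+\tilde{\mathbf r}_2-\tilde{\mathbf r}_1)/\mathbf m_1]$. (ii) If $\mathbf q_{21}<-\sigma_j/2$: if some $y\in S_{1,\ddot n_{1,j}}$ satisfies $-\sigma_j/2\le\mathbf q_{21}+y<\sigma_j/2$, let $s_1=y$; otherwise let $s_1$ be an element of $S_{1,\ddot n_{1,j}}$ at minimum distance from $-\mathbf q_{21}$. Let $\hat n_1\in[0,\Gamma_2)$ with $\hat n_1\equiv s_1\bar\Gamma_{12}\pmod{\Gamma_2}$ and $\hat n_2=[(\hat n_1\mathbf m_1+\tilde{\mathbf r}_1-\tilde{\mathbf r}_2)/\mathbf m_2]$. (iii) If $-\sigma_j/2\le\mathbf q_{21}<\sigma_j/2$: $\hat n_1=\hat n_2=0$. *)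

(* Defs.v *)
From Stdlib Require Import Reals Lra Lia ZArith List.
Import ListNotations.
Open Scope R_scope.

Definition Rfloor (x : R) : Z := (up x - 1)%Z.
Definition Rround (x : R) : Z := Rfloor (x + / 2).

(* Euclidean sequence: sig_aux i = (sigma_{i-1}, sigma_i),
   sigma_{-1} = G2, sigma_0 = G1, sigma_i = |sigma_{i-2}|_{sigma_{i-1}}. *)
Fixpoint sig_aux (G1 G2 : Z) (i : nat) : Z * Z :=
  match i with
  | O => (G2, G1)
  | S k => let (a, b) := sig_aux G1 G2 k in (b, Z.modulo a b)
  end.
Definition eucl_sigma (G1 G2 : Z) (i : nat) : Z := snd (sig_aux G1 G2 i).

(* Sset a b n = { |t a|_b : 0 <= t <= n };
   S_{2,n} = Sset G2 G1 n,  S_{1,n} = Sset G1 G2 n *)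
Definition Sset (a b : Z) (n : nat) : list Z :=
  map (fun t => (Z.of_nat t * a) mod b)%Z (seq 0 (S n)).

Definition list_min (l : list Z) : Z :=
  match l with [] => 0%Z | x :: r => fold_right Z.min x r end.

Definition min_dist (l : list Z) : Z :=
  list_min (flat_map (fun x => flat_map (fun y =>
     if Z.eq_dec x y then [] else [Z.abs (x - y)]) l) l).

(* ddot a b s = max { n : 1 <= n < b, min_dist (Sset a b n) >= s };
   ddot_{2,j} = ddot G2 G1 sigma_j,  ddot_{1,j} = ddot G1 G2 sigma_j *)
Definition ddot (a b s : Z) : nat :=
  fold_right Nat.max 0%nat
    (filter (fun n => Z.leb s (min_dist (Sset a b n))) (seq 1 (Z.to_nat b - 1))).

Definition fold_int (Mi N : R) : Z := Rfloor (N / Mi).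
Definition rem_r (Mi N : R) : R := N - IZR (fold_int Mi N) * Mi.

(* Algorithm 2 (real version, index j): alg2 ... nh1 nh2 means that
   (nh1, nh2) is a possible output on input rt1, rt2 (the "element at minimum
   distance" choice may be non-deterministic in case of ties). *)
Definition alg2 (m : R) (G1 G2 : Z) (j : nat) (rt1 rt2 : R) (nh1 nh2 : Z) : Prop :=
  let m1 := m * IZR G1 in
  let m2 := m * IZR G2 in
  let q := (rt1 - rt2) / m in
  let sj := IZR (eucl_sigma G1 G2 j) in
  let S2 := Sset G2 G1 (ddot G2 G1 (eucl_sigma G1 G2 j)) in
  let S1 := Sset G1 G2 (ddot G1 G2 (eucl_sigma G1 G2 j)) in
  (sj / 2 <= q ->
     exists s2, In s2 S2 /\
       ((exists x, In x S2 /\ - sj / 2 <= q - IZR x < sj / 2) ->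
          - sj / 2 <= q - IZR s2 < sj / 2) /\
       (~ (exists x, In x S2 /\ - sj / 2 <= q - IZR x < sj / 2) ->
          forall y, In y S2 -> Rabs (q - IZR s2) <= Rabs (q - IZR y)) /\
       (0 <= nh2 < G1)%Z /\
       (exists inv, (G2 * inv) mod G1 = 1 /\ nh2 mod G1 = (s2 * inv) mod G1)%Z /\
       nh1 = Rround ((IZR nh2 * m2 + rt2 - rt1) / m1)) /\
  (q < - sj / 2 ->
     exists s1, In s1 S1 /\
       ((exists y, In y S1 /\ - sj / 2 <= q + IZR y < sj / 2) ->
          - sj / 2 <= q + IZR s1 < sj / 2) /\
       (~ (exists y, In y S1 /\ - sj / 2 <= q + IZR y < sj / 2) ->
          forall y, In y S1 -> Rabs (- q - IZR s1) <= Rabs (- q - IZR y)) /\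
       (0 <= nh1 < G2)%Z /\
       (exists inv, (G1 * inv) mod G2 = 1 /\ nh1 mod G2 = (s1 * inv) mod G2)%Z /\
       nh2 = Rround ((IZR nh1 * m1 + rt1 - rt2) / m2)) /\
  (- sj / 2 <= q < sj / 2 -> nh1 = 0%Z /\ nh2 = 0%Z).

(* Main.v *)
Require Import Defs.
From Stdlib Require Import Reals Lra Lia ZArith List.
Import ListNotations.
Module MP1.
Local Open Scope R_scope.

Lemma Rfloor_spec x : IZR (Rfloor x) <= x < IZR (Rfloor x) + 1.
Proof. unfold Rfloor. destruct (archimed x) as [H1 H2]. rewrite minus_IZR. simpl. lra. Qed.

Lemma Rfloor_unique z x : IZR z <= x < IZR z + 1 -> Rfloor x = z.
Proof.
  intros [H1 H2]. unfold Rfloor.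
  assert (up x = z + 1)%Z. { symmetry; apply tech_up; rewrite plus_IZR; simpl; lra. }
  lia.
Qed.

Lemma Rround_near (n : Z) d : - / 2 < d < / 2 -> Rround (IZR n + d) = n.
Proof. intros H. unfold Rround. apply Rfloor_unique. lra. Qed.

Lemma IZR_lt_int a b : IZR a < IZR b -> (a < b)%Z.
Proof. apply lt_IZR. Qed.

Lemma fold_min_le x r z : In z (x :: r) -> (fold_right Z.min x r <= z)%Z.
Proof.
  induction r as [|y r IH]; simpl; intros H.
  - destruct H as [H|[]]; subst; lia.
  - destruct H as [H|[H|H]].
    + subst. assert (fold_right Z.min z r <= z)%Z by (apply IH; left; auto). lia.
    + subst; lia.
    + assert (fold_right Z.min x r <= z)%Z by (apply IH; right; auto). lia.
Qed.

Lemma fold_min_in x r : In (fold_right Z.min x r) (x :: r).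
Proof.
  induction r as [|y r IH]; simpl; auto.
  destruct (Z.min_spec y (fold_right Z.min x r)) as [[_ E]|[_ E]]; rewrite E.
  - right; left; auto.
  - simpl in IH. destruct IH as [IH|IH]; auto.
Qed.

Lemma list_min_le l z : In z l -> (list_min l <= z)%Z.
Proof. destruct l as [|x r]; [intros []|]. apply fold_min_le. Qed.

Lemma list_min_in l : l <> nil -> In (list_min l) l.
Proof. destruct l as [|x r]; [congruence|]. intros _. apply fold_min_in. Qed.

Lemma pairs_in (l : list Z) x y : In x l -> In y l -> x <> y ->
  In (Z.abs (x - y)) (flat_map (fun x => flat_map (fun y =>
     if Z.eq_dec x y then [] else [Z.abs (x - y)]) l) l).
Proof.
  intros Hx Hy Hne. apply in_flat_map. exists x. split; auto.
  apply in_flat_map. exists y. split; auto.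
  destruct (Z.eq_dec x y); [congruence|]. left; auto.
Qed.

Lemma pairs_out (l : list Z) d :
  In d (flat_map (fun x => flat_map (fun y =>
     if Z.eq_dec x y then [] else [Z.abs (x - y)]) l) l) ->
  exists x y, In x l /\ In y l /\ x <> y /\ d = Z.abs (x - y).
Proof.
  intros H. apply in_flat_map in H. destruct H as [x [Hx H]].
  apply in_flat_map in H. destruct H as [y [Hy H]].
  destruct (Z.eq_dec x y) as [|Hne]; [destruct H|].
  destruct H as [H|[]]. exists x, y; auto.
Qed.

Lemma min_dist_le l x y : In x l -> In y l -> x <> y -> (min_dist l <= Z.abs (x - y))%Z.
Proof. intros. unfold min_dist. apply list_min_le. apply pairs_in; auto. Qed.

Lemma min_dist_lt l x y s : In x l -> In y l -> x <> y -> (min_dist l < s)%Z ->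
  exists a b, In a l /\ In b l /\ a <> b /\ (Z.abs (a - b) < s)%Z.
Proof.
  intros Hx Hy Hne Hlt. unfold min_dist in Hlt.
  pose proof (list_min_in _ (ltac:(intro E; pose proof (pairs_in l x y Hx Hy Hne) as P; rewrite E in P; destruct P))) as Hin.
  apply pairs_out in Hin. destruct Hin as [a [b [Ha [Hb [Hab E]]]]].
  exists a, b. repeat split; auto. lia.
Qed.

Lemma Sset_in a b n x : In x (Sset a b n) <-> exists t, (t <= n)%nat /\ x = ((Z.of_nat t * a) mod b)%Z.
Proof.
  unfold Sset. rewrite in_map_iff. split.
  - intros [t [E H]]. apply in_seq in H. exists t. split; [lia|auto].
  - intros [t [H E]]. exists t. split; auto. apply in_seq. lia.
Qed.

Lemma Sset_S a b n x : In x (Sset a b (S n)) -> In x (Sset a b n) \/ x = ((Z.of_nat (S n) * a) mod b)%Z.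
Proof.
  rewrite !Sset_in. intros [t [H E]]. destruct (Nat.eq_dec t (S n)).
  - subst t. right; exact E.
  - left. exists t. split; [lia|exact E].
Qed.

Lemma fold_max_in (l : list nat) : fold_right Nat.max 0%nat l = 0%nat \/ In (fold_right Nat.max 0%nat l) l.
Proof.
  induction l as [|a l IH]; simpl; auto.
  destruct (Nat.max_spec a (fold_right Nat.max 0%nat l)) as [[_ E]|[_ E]]; rewrite E.
  - destruct IH as [IH|IH]; [left; exact IH|right; right; exact IH].
  - right; left; reflexivity.
Qed.

Lemma fold_max_ge (l : list nat) n : In n l -> (n <= fold_right Nat.max 0%nat l)%nat.
Proof.
  induction l as [|a l IH]; simpl; [intros []|]. intros [H|H]; subst; [lia|].
  specialize (IH H). lia.
Qed.
End MP1.
Import MP1.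
Module MP2.
Local Open Scope Z_scope.

Lemma ddot_lt a b s : 1 < b -> Z.of_nat (ddot a b s) < b.
Proof.
  intros Hb. unfold ddot.
  destruct (fold_max_in (filter (fun n => Z.leb s (min_dist (Sset a b n))) (seq 1 (Z.to_nat b - 1)))) as [E|H].
  - rewrite E. simpl. lia.
  - apply filter_In in H. destruct H as [H _]. apply in_seq in H. lia.
Qed.

Lemma ddot_sep a b s x y : In x (Sset a b (ddot a b s)) -> In y (Sset a b (ddot a b s)) -> x <> y ->
  s <= Z.abs (x - y).
Proof.
  intros Hx Hy Hne. unfold ddot in *.
  destruct (fold_max_in (filter (fun n => Z.leb s (min_dist (Sset a b n))) (seq 1 (Z.to_nat b - 1)))) as [E|H].
  - rewrite E in Hx, Hy. apply Sset_in in Hx, Hy.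
    destruct Hx as [t [Ht Et]], Hy as [u [Hu Eu]].
    assert (t = 0%nat) by lia. assert (u = 0%nat) by lia. subst. congruence.
  - apply filter_In in H. destruct H as [_ H]. apply Z.leb_le in H.
    pose proof (min_dist_le _ _ _ Hx Hy Hne). lia.
Qed.

Lemma ddot_max a b s n : (ddot a b s < n)%nat -> (1 <= n)%nat -> Z.of_nat n < b ->
  min_dist (Sset a b n) < s.
Proof.
  intros H1 H2 H3. destruct (Z.leb s (min_dist (Sset a b n))) eqn:E.
  - exfalso. assert (In n (filter (fun n => Z.leb s (min_dist (Sset a b n))) (seq 1 (Z.to_nat b - 1)))).
    { apply filter_In. split; auto. apply in_seq. lia. }
    apply fold_max_ge in H. unfold ddot in H1. lia.
  - apply Z.leb_gt in E. exact E.
Qed.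

Lemma mod_nonzero a b : 1 < b -> Z.gcd a b = 1 -> a mod b <> 0.
Proof.
  intros Hb Hg E. apply Z.mod_divide in E; [|lia].
  assert (Hd : (b | Z.gcd a b)) by (apply Z.gcd_greatest; auto; apply Z.divide_refl).
  rewrite Hg in Hd. apply Z.divide_pos_le in Hd; lia.
Qed.

Lemma Sset_zero a b n : b <> 0 -> In 0 (Sset a b n).
Proof. intros. apply Sset_in. exists 0%nat. split; [lia|]. simpl. rewrite Z.mod_0_l; auto. Qed.

Lemma Sset_elt a b n t : 0 <= t -> (Z.to_nat t <= n)%nat -> In ((t * a) mod b) (Sset a b n).
Proof. intros. apply Sset_in. exists (Z.to_nat t). split; auto. rewrite Z2Nat.id; auto. Qed.

Lemma ddot_near a b s : 1 < b -> Z.gcd a b = 1 -> Z.of_nat (S (ddot a b s)) < b ->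
  exists x, In x (Sset a b (ddot a b s)) /\ x <> (Z.of_nat (S (ddot a b s)) * a) mod b /\
    Z.abs (x - (Z.of_nat (S (ddot a b s)) * a) mod b) < s.
Proof.
  intros Hb Hg Hn.
  set (D := ddot a b s) in *.
  assert (H0 : In 0 (Sset a b (S D))) by (apply Sset_zero; lia).
  assert (H1 : In (a mod b) (Sset a b (S D))).
  { apply Sset_in. exists 1%nat. split; [lia|]. f_equal. lia. }
  pose proof (mod_nonzero a b Hb Hg).
  destruct (min_dist_lt _ _ _ s H0 H1 (ltac:(auto)) (ddot_max a b s (S D) (ltac:(lia)) (ltac:(lia)) Hn))
    as [x [y [Hx [Hy [Hxy Hlt]]]]].
  apply Sset_S in Hx, Hy.
  destruct Hx as [Hx|Ex], Hy as [Hy|Ey].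
  - pose proof (ddot_sep a b s x y Hx Hy Hxy). lia.
  - exists x. subst y. split; auto.
  - exists y. subst x. split; auto. split; auto. lia.
  - congruence.
Qed.

Lemma sig_SS G1 G2 i : eucl_sigma G1 G2 (S (S i)) = eucl_sigma G1 G2 i mod eucl_sigma G1 G2 (S i).
Proof. unfold eucl_sigma. simpl. destruct (sig_aux G1 G2 i) as [a b]. reflexivity. Qed.

Lemma sig_0 G1 G2 : eucl_sigma G1 G2 0 = G1.
Proof. reflexivity. Qed.
Lemma sig_1 G1 G2 : eucl_sigma G1 G2 1 = G2 mod G1.
Proof. reflexivity. Qed.

Lemma sig_bounds G1 G2 K j : 1 < G1 < G2 ->
  1 < eucl_sigma G1 G2 K -> eucl_sigma G1 G2 (S K) = 1 ->
  (1 <= j <= S K)%nat -> 1 <= eucl_sigma G1 G2 j < G1.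
Proof.
  intros HG HK HK1 Hj.
  set (sg := eucl_sigma G1 G2).
  assert (Hnn : forall i, 0 <= sg i /\ 0 <= sg (S i)).
  { induction i as [|i [IH1 IH2]].
    - unfold sg; rewrite sig_0, sig_1. split; [lia|]. apply Z.mod_pos_bound; lia.
    - split; auto. unfold sg in *; rewrite sig_SS.
      destruct (Z.eq_dec (eucl_sigma G1 G2 (S i)) 0) as [E|E].
      + rewrite E, Zmod_0_r. auto.
      + apply Z.mod_pos_bound; lia. }
  assert (Hz : forall i t, sg i = 0 -> sg (i + 2 * t)%nat = 0).
  { intros i t Hi. induction t as [|t IH].
    - rewrite Nat.add_0_r; auto.
    - replace (i + 2 * S t)%nat with (S (S (i + 2 * t))) by lia.
      unfold sg in *. rewrite sig_SS, IH.
      destruct (Z.eq_dec (eucl_sigma G1 G2 (S (i + 2 * t))) 0) as [E|E].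
      + rewrite E; reflexivity.
      + apply Z.mod_0_l; auto. }
  assert (Hpos : forall i, (i <= S K)%nat -> 0 < sg i).
  { intros i Hi. destruct (Hnn i) as [Hi0 _].
    destruct (Z.eq_dec (sg i) 0) as [E|E]; [|lia]. exfalso.
    destruct (Nat.Even_or_Odd (S K - i)) as [[t Ht]|[t Ht]].
    - pose proof (Hz i t E). replace (i + 2 * t)%nat with (S K) in H by lia.
      unfold sg in H; lia.
    - pose proof (Hz i t E). replace (i + 2 * t)%nat with K in H by lia.
      unfold sg in H; lia. }
  assert (Hdec : forall i, 0 < sg i -> sg (S i) < sg i).
  { intros [|i] Hi.
    - unfold sg in *; rewrite sig_1, sig_0. apply Z.mod_pos_bound; lia.
    - unfold sg in *; rewrite sig_SS. apply Z.mod_pos_bound; lia. }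
  assert (Hle : forall i, (i <= S K)%nat -> sg i <= G1).
  { induction i as [|i IH]; intros Hi.
    - unfold sg; rewrite sig_0; lia.
    - pose proof (IH (ltac:(lia))). pose proof (Hdec i (Hpos i (ltac:(lia)))). lia. }
  destruct j as [|j]; [lia|].
  pose proof (Hpos (S j) (ltac:(lia))). pose proof (Hle j (ltac:(lia))).
  pose proof (Hdec j (Hpos j (ltac:(lia)))). fold sg. lia.
Qed.
End MP2.
Import MP2.
Module MP3.
Local Open Scope R_scope.

Lemma modinv_eq (a b inv nh t : Z) : (0 < b)%Z -> ((a * inv) mod b = 1)%Z ->
  (nh mod b = (((t * a) mod b) * inv) mod b)%Z -> (nh mod b = t mod b)%Z.
Proof.
  intros Hb Hi H. rewrite H. rewrite Z.mul_mod_idemp_l by lia.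
  replace (t * a * inv)%Z with (t * (a * inv))%Z by ring.
  rewrite <- Z.mul_mod_idemp_r by lia. rewrite Hi, Z.mul_1_r. reflexivity.
Qed.

Lemma modinv_back (a b inv nh x : Z) : (0 < b)%Z -> ((a * inv) mod b = 1)%Z ->
  (nh mod b = (x * inv) mod b)%Z -> ((nh * a) mod b = x mod b)%Z.
Proof.
  intros Hb Hi H. rewrite <- Z.mul_mod_idemp_l by lia. rewrite H.
  rewrite Z.mul_mod_idemp_l by lia.
  replace (x * inv * a)%Z with (x * (a * inv))%Z by ring.
  rewrite <- Z.mul_mod_idemp_r by lia. rewrite Hi, Z.mul_1_r. reflexivity.
Qed.

Lemma bezout_inv a b : (1 < b)%Z -> Z.gcd a b = 1%Z -> exists inv, ((a * inv) mod b = 1)%Z.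
Proof.
  intros Hb Hg. destruct (Z.gcd_bezout a b 1 Hg) as [u [v E]].
  exists u. symmetry. apply (Z.mod_unique _ _ (- v)); lia.
Qed.

Lemma fold_bounds Mi N : 0 < Mi -> IZR (fold_int Mi N) * Mi <= N < (IZR (fold_int Mi N) + 1) * Mi.
Proof.
  intros H. unfold fold_int. pose proof (Rfloor_spec (N / Mi)) as [H1 H2].
  split.
  - apply (Rmult_le_compat_r Mi) in H1; [|lra]. unfold Rdiv in H1. rewrite Rmult_assoc, Rinv_l in H1; lra.
  - apply (Rmult_lt_compat_r Mi) in H2; [|lra]. unfold Rdiv in H2. rewrite Rmult_assoc, Rinv_l in H2; lra.
Qed.

Lemma small_div (e g : R) : 0 < g -> - g < 2 * e < g -> - / 2 < e / g < / 2.
Proof.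
  intros Hg He. split.
  - apply (Rmult_lt_reg_r g); [lra|]. unfold Rdiv. rewrite Rmult_assoc, Rinv_l; lra.
  - apply (Rmult_lt_reg_r g); [lra|]. unfold Rdiv. rewrite Rmult_assoc, Rinv_l; lra.
Qed.

Lemma partA m G1 G2 j s N rt1 rt2 nh1 nh2 :
  0 < m -> (1 < G1 < G2)%Z -> Z.gcd G1 G2 = 1%Z -> eucl_sigma G1 G2 j = s -> (1 <= s < G1)%Z ->
  0 <= N -> N < m * IZR G2 * (1 + INR (ddot G2 G1 s)) ->
  N < m * IZR G1 * (1 + INR (ddot G1 G2 s)) ->
  0 <= rt1 < m * IZR G1 -> 0 <= rt2 < m * IZR G2 ->
  - IZR s / 2 <= ((rt1 - rem_r (m * IZR G1) N) - (rt2 - rem_r (m * IZR G2) N)) / m < IZR s / 2 ->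
  alg2 m G1 G2 j rt1 rt2 nh1 nh2 ->
  nh1 = fold_int (m * IZR G1) N /\ nh2 = fold_int (m * IZR G2) N.
Proof.
  intros Hm HG Hg Hs Hs1 HN0 HN2 HN1 Hr1 Hr2 He Halg.
  assert (HG1 : 1 < IZR G1) by (apply IZR_lt; lia).
  assert (HG2 : 1 < IZR G2) by (apply IZR_lt; lia).
  assert (Hm1 : 0 < m * IZR G1) by nra.
  assert (Hm2 : 0 < m * IZR G2) by nra.
  set (D2 := ddot G2 G1 s) in *. set (D1 := ddot G1 G2 s) in *.
  pose proof (ddot_lt G2 G1 s (ltac:(lia))) as HD2. fold D2 in HD2.
  pose proof (ddot_lt G1 G2 s (ltac:(lia))) as HD1. fold D1 in HD1.
  rewrite INR_IZR_INZ in HN1, HN2.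
  unfold rem_r in He |- *.
  set (n1 := fold_int (m * IZR G1) N) in *. set (n2 := fold_int (m * IZR G2) N) in *.
  pose proof (fold_bounds (m * IZR G1) N Hm1) as Hb1. fold n1 in Hb1.
  pose proof (fold_bounds (m * IZR G2) N Hm2) as Hb2. fold n2 in Hb2.
  assert (Hn1 : (0 <= n1 <= Z.of_nat D1)%Z).
  { split.
    - assert (-1 < IZR n1) by nra. apply lt_IZR in H. lia.
    - assert (IZR n1 < IZR (1 + Z.of_nat D1)) by (rewrite plus_IZR; simpl; nra).
      apply lt_IZR in H. lia. }
  assert (Hn2 : (0 <= n2 <= Z.of_nat D2)%Z).
  { split.
    - assert (-1 < IZR n2) by nra. apply lt_IZR in H. lia.
    - assert (IZR n2 < IZR (1 + Z.of_nat D2)) by (rewrite plus_IZR; simpl; nra).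
      apply lt_IZR in H. lia. }
  set (k := (n2 * G2 - n1 * G1)%Z).
  set (e := ((rt1 - (N - IZR n1 * (m * IZR G1))) - (rt2 - (N - IZR n2 * (m * IZR G2)))) / m) in *.
  assert (Hq : (rt1 - rt2) / m = IZR k + e).
  { unfold e, k. rewrite minus_IZR, !mult_IZR. field. lra. }
  assert (Hk : (- G2 < k < G1)%Z).
  { split; apply lt_IZR; unfold k; rewrite ?opp_IZR, minus_IZR, !mult_IZR; nra. }
  assert (HkS2 : (0 <= k)%Z -> In k (Sset G2 G1 D2)).
  { intros H. replace k with ((n2 * G2) mod G1)%Z.
    - apply Sset_elt; lia.
    - symmetry. apply (Z.mod_unique _ _ n1); unfold k; lia. }
  assert (HkS1 : (k <= 0)%Z -> In (- k)%Z (Sset G1 G2 D1)).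
  { intros H. replace (- k)%Z with ((n1 * G1) mod G2)%Z.
    - apply Sset_elt; lia.
    - symmetry. apply (Z.mod_unique _ _ n2); unfold k; lia. }
  unfold alg2 in Halg. cbv zeta in Halg. rewrite Hs in Halg. fold D1 D2 in Halg.
  rewrite Hq in Halg. destruct Halg as [Hi [Hii Hiii]].
  destruct He as [He1 He2].
  destruct (Rle_lt_dec (IZR s / 2) (IZR k + e)) as [C1|C1].
  {
    assert (Hkp : (0 < k)%Z) by (apply lt_IZR; lra).
    destruct (Hi C1) as [s2 [Hs2 [Hc1 [_ [Hnh2 [[inv [Hinv Hmd]] Hnh1]]]]]].
    assert (W : - IZR s / 2 <= IZR k + e - IZR s2 < IZR s / 2).
    { apply Hc1. exists k. split; [apply HkS2; lia|]. replace (IZR k + e - IZR k) with e by ring. lra. }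
    assert (Es2 : s2 = k).
    { destruct (Z.eq_dec s2 k) as [E|E]; auto. exfalso.
      pose proof (ddot_sep G2 G1 s s2 k Hs2 (HkS2 (ltac:(lia))) E).
      assert (IZR (s2 - k) < IZR s) by (rewrite minus_IZR; lra).
      assert (IZR (- s) < IZR (s2 - k)) by (rewrite minus_IZR, opp_IZR; lra).
      apply lt_IZR in H0. apply lt_IZR in H1. lia. }
    subst s2.
    assert (Ek : k = ((n2 * G2) mod G1)%Z) by (apply (Z.mod_unique _ _ n1); unfold k; lia).
    rewrite Ek in Hmd. apply modinv_eq in Hmd; [|lia|auto].
    rewrite !Z.mod_small in Hmd by lia. subst nh2. split; auto.
    rewrite Hnh1.
    replace ((IZR n2 * (m * IZR G2) + rt2 - rt1) / (m * IZR G1)) with (IZR n1 + (- e / IZR G1)).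
    - apply Rround_near. apply small_div; [lra|].
      assert (IZR (s + 1) <= IZR G1) by (apply IZR_le; lia). rewrite plus_IZR in H; simpl in H. lra.
    - assert (E2 : rt1 - rt2 = m * (IZR k + e)).
      { rewrite <- Hq. field. lra. }
      unfold k in E2. rewrite minus_IZR, !mult_IZR in E2.
      field_simplify_eq; [|split; lra]. nra. }
  destruct (Rlt_le_dec (IZR k + e) (- IZR s / 2)) as [C2|C2].
  {
    assert (Hkn : (k < 0)%Z) by (apply lt_IZR; lra).
    destruct (Hii C2) as [s1 [Hs1' [Hc1 [_ [Hnh1 [[inv [Hinv Hmd]] Hnh2]]]]]].
    assert (W : - IZR s / 2 <= IZR k + e + IZR s1 < IZR s / 2).
    { apply Hc1. exists (- k)%Z. split; [apply HkS1; lia|]. rewrite opp_IZR. replace (IZR k + e + - IZR k) with e by ring. lra. }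
    assert (Es1 : s1 = (- k)%Z).
    { destruct (Z.eq_dec s1 (- k)) as [E|E]; auto. exfalso.
      pose proof (ddot_sep G1 G2 s s1 (- k) Hs1' (HkS1 (ltac:(lia))) E).
      assert (IZR (s1 + k) < IZR s) by (rewrite plus_IZR; lra).
      assert (IZR (- s) < IZR (s1 + k)) by (rewrite plus_IZR, opp_IZR; lra).
      apply lt_IZR in H0. apply lt_IZR in H1. lia. }
    subst s1.
    assert (Ek : (- k)%Z = ((n1 * G1) mod G2)%Z) by (apply (Z.mod_unique _ _ n2); unfold k; lia).
    rewrite Ek in Hmd. apply modinv_eq in Hmd; [|lia|auto].
    rewrite !Z.mod_small in Hmd by lia. subst nh1. split; auto.
    rewrite Hnh2.
    replace ((IZR n1 * (m * IZR G1) + rt1 - rt2) / (m * IZR G2)) with (IZR n2 + (e / IZR G2)).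
    - apply Rround_near. apply small_div; [lra|].
      assert (IZR (s + 1) <= IZR G1) by (apply IZR_le; lia). rewrite plus_IZR in H; simpl in H.
      assert (IZR G1 < IZR G2) by (apply IZR_lt; lia). lra.
    - assert (E2 : rt1 - rt2 = m * (IZR k + e)).
      { rewrite <- Hq. field. lra. }
      unfold k in E2. rewrite minus_IZR, !mult_IZR in E2.
      field_simplify_eq; [|split; lra]. nra. }
  destruct (Hiii (conj C2 C1)) as [E1 E2].
  assert (Hk0 : k = 0%Z).
  { destruct (Z.lt_trichotomy k 0) as [H|[H|H]]; auto; exfalso.
    - pose proof (ddot_sep G1 G2 s (- k) 0 (HkS1 (ltac:(lia))) (Sset_zero G1 G2 D1 (ltac:(lia))) (ltac:(lia))).
      assert (IZR s <= IZR (- k)) by (apply IZR_le; lia). rewrite opp_IZR in H1. lra.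
    - pose proof (ddot_sep G2 G1 s k 0 (HkS2 (ltac:(lia))) (Sset_zero G2 G1 D2 (ltac:(lia))) (ltac:(lia))).
      assert (IZR s <= IZR k) by (apply IZR_le; lia). lra. }
  assert (Hdiv : (G1 | n2)%Z).
  { apply (Z.gauss _ G2); auto. exists n1. unfold k in Hk0. lia. }
  destruct Hdiv as [c Hc].
  assert (Hn20 : n2 = 0%Z).
  { assert (n2 < G1)%Z by lia. clear -Hc H HG Hn2.
    destruct (Z.lt_trichotomy c 0) as [Hc0|[Hc0|Hc0]]; subst; nia. }
  assert (Hn10 : (n1 * G1 = 0)%Z) by (unfold k in Hk0; rewrite Hn20 in Hk0; lia).
  apply Z.mul_eq_0 in Hn10. assert (n1 = 0%Z) by lia.
  rewrite E1, E2. auto.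
Qed.
End MP3.
Import MP3.
Module MP4.
Local Open Scope R_scope.

Lemma fold_int_mult m G w : 0 < m -> (0 < G)%Z ->
  fold_int (m * IZR G) (m * IZR w) = (w / G)%Z /\
  rem_r (m * IZR G) (m * IZR w) = m * IZR (w mod G).
Proof.
  intros Hm HG.
  assert (HGr : 0 < IZR G) by (apply IZR_lt; lia).
  pose proof (Z.mod_pos_bound w G HG) as Hb.
  assert (Ew : w = (G * (w / G) + w mod G)%Z) by (apply Z.div_mod; lia).
  assert (F : fold_int (m * IZR G) (m * IZR w) = (w / G)%Z).
  { unfold fold_int. apply Rfloor_unique.
    replace (m * IZR w / (m * IZR G)) with (IZR (w / G) + IZR (w mod G) / IZR G).
    - assert (0 <= IZR (w mod G)) by (apply IZR_le; lia).
      assert (IZR (w mod G) < IZR G) by (apply IZR_lt; lia).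
      assert (0 <= IZR (w mod G) / IZR G) by (unfold Rdiv; apply Rmult_le_pos; [lra|left; apply Rinv_0_lt_compat; lra]).
      assert (IZR (w mod G) / IZR G < 1).
      { apply (Rmult_lt_reg_r (IZR G)); [lra|]. unfold Rdiv. rewrite Rmult_assoc, Rinv_l; lra. }
      lra.
    - rewrite Ew at 3. rewrite plus_IZR, mult_IZR. field. lra. }
  split; auto. unfold rem_r. rewrite F. rewrite Ew at 1. rewrite plus_IZR, mult_IZR. ring.
Qed.

Lemma Sset_bound a b n x : (0 < b)%Z -> In x (Sset a b n) -> (0 <= x < b)%Z.
Proof. intros Hb H. apply Sset_in in H. destruct H as [t [_ E]]. subst. apply Z.mod_pos_bound; auto. Qed.

Lemma alg2_iii m G1 G2 j rt1 rt2 :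
  (1 <= eucl_sigma G1 G2 j)%Z ->
  - IZR (eucl_sigma G1 G2 j) / 2 <= (rt1 - rt2) / m < IZR (eucl_sigma G1 G2 j) / 2 ->
  alg2 m G1 G2 j rt1 rt2 0 0.
Proof.
  intros Hs Hq. unfold alg2. cbv zeta. split; [|split].
  - intros H. lra.
  - intros H. lra.
  - intros _. auto.
Qed.

Lemma alg2_iii_out m G1 G2 j rt1 rt2 nh1 nh2 :
  - IZR (eucl_sigma G1 G2 j) / 2 <= (rt1 - rt2) / m < IZR (eucl_sigma G1 G2 j) / 2 ->
  alg2 m G1 G2 j rt1 rt2 nh1 nh2 -> nh1 = 0%Z /\ nh2 = 0%Z.
Proof. intros Hq H. unfold alg2 in H. cbv zeta in H. destruct H as [_ [_ H]]. auto. Qed.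

Lemma int_window (a b s : Z) e :
  - IZR s / 2 <= IZR a + e - IZR b < IZR s / 2 -> - IZR s / 2 <= e < IZR s / 2 -> (Z.abs (a - b) < s)%Z.
Proof.
  intros H1 H2.
  assert (IZR (a - b) < IZR s) by (rewrite minus_IZR; lra).
  assert (IZR (- s) < IZR (a - b)) by (rewrite minus_IZR, opp_IZR; lra).
  apply lt_IZR in H. apply lt_IZR in H0. lia.
Qed.

Lemma window_half (x k s : Z) : (Z.abs (x - k) < s)%Z ->
  - IZR s / 2 < (IZR x - IZR k) / 2 < IZR s / 2.
Proof.
  intros H. assert (IZR (x - k) <= IZR (s - 1)) by (apply IZR_le; lia).
  assert (IZR (- (s - 1)) <= IZR (x - k)) by (apply IZR_le; lia).
  rewrite !minus_IZR in H0. rewrite opp_IZR, !minus_IZR in H1.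
  assert (IZR 1 = 1) by reflexivity. lra.
Qed.
End MP4.
Import MP4.
Module MP5.
Local Open Scope R_scope.

Definition goalB m G1 G2 j s X :=
  exists rt1 rt2 : R,
     0 <= rt1 < m * IZR G1 /\ 0 <= rt2 < m * IZR G2 /\
     - IZR s / 2 <= ((rt1 - rem_r (m * IZR G1) X) - (rt2 - rem_r (m * IZR G2) X)) / m < IZR s / 2 /\
     (exists nh1 nh2, alg2 m G1 G2 j rt1 rt2 nh1 nh2) /\
     (forall nh1 nh2, alg2 m G1 G2 j rt1 rt2 nh1 nh2 ->
        (nh1, nh2) <> (fold_int (m * IZR G1) X, fold_int (m * IZR G2) X)).

Lemma lcm_case m G1 G2 j s X : 0 < m -> (1 < G1 < G2)%Z -> eucl_sigma G1 G2 j = s -> (1 <= s)%Z ->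
  X = m * IZR (G1 * G2) -> goalB m G1 G2 j s X.
Proof.
  intros Hm HG Hs Hs1 HX.
  assert (HG1 : 1 < IZR G1) by (apply IZR_lt; lia).
  assert (HG2 : 1 < IZR G2) by (apply IZR_lt; lia).
  assert (Hsr : 1 <= IZR s) by (apply IZR_le; lia).
  destruct (fold_int_mult m G1 (G1 * G2) Hm (ltac:(lia))) as [F1 R1].
  destruct (fold_int_mult m G2 (G1 * G2) Hm (ltac:(lia))) as [F2 R2].
  rewrite <- HX in F1, R1, F2, R2.
  rewrite (Z.mul_comm G1 G2), Z.div_mul in F1 by lia.
  rewrite (Z.mul_comm G1 G2), Z.mod_mul in R1 by lia.
  rewrite Z.div_mul in F2 by lia. rewrite Z.mod_mul in R2 by lia.
  exists 0, 0. split; [split; nra|]. split; [split; nra|].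
  rewrite R1, R2. replace ((0 - m * IZR 0 - (0 - m * IZR 0)) / m) with 0 by (simpl; field; lra).
  split; [lra|]. split.
  - exists 0%Z, 0%Z. apply alg2_iii; [lia|]. rewrite Hs. replace ((0 - 0) / m) with 0 by (field; lra). lra.
  - intros nh1 nh2 H. apply alg2_iii_out in H.
    + destruct H as [-> ->]. rewrite F1. intro E. injection E. lia.
    + rewrite Hs. replace ((0 - 0) / m) with 0 by (field; lra). lra.
Qed.
End MP5.
Import MP5.
Module MP6.
Local Open Scope R_scope.

Lemma case1 m G1 G2 j s : 0 < m -> (1 < G1 < G2)%Z -> Z.gcd G1 G2 = 1%Z ->
  eucl_sigma G1 G2 j = s -> (1 <= s < G1)%Z ->
  (Z.of_nat (S (ddot G2 G1 s)) < G1)%Z ->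
  goalB m G1 G2 j s (m * IZR G2 * (1 + INR (ddot G2 G1 s))).
Proof.
  intros Hm HG Hg Hs Hs1 HD.
  assert (HG1 : 1 < IZR G1) by (apply IZR_lt; lia).
  assert (HG2 : 1 < IZR G2) by (apply IZR_lt; lia).
  assert (Hsr : 1 <= IZR s) by (apply IZR_le; lia).
  assert (Hg' : Z.gcd G2 G1 = 1%Z) by (rewrite Z.gcd_comm; auto).
  destruct (ddot_near G2 G1 s (ltac:(lia)) Hg' HD) as [x [Hx [Hxk Hxs]]].
  set (D2 := ddot G2 G1 s) in *.
  set (n2 := Z.of_nat (S D2)) in *.
  set (w := (n2 * G2)%Z) in *.
  set (k := (w mod G1)%Z) in *.
  assert (HX : m * IZR G2 * (1 + INR D2) = m * IZR w).
  { unfold w, n2. rewrite mult_IZR, <- INR_IZR_INZ, S_INR. ring. }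
  rewrite HX.
  destruct (fold_int_mult m G1 w Hm (ltac:(lia))) as [F1 R1].
  destruct (fold_int_mult m G2 w Hm (ltac:(lia))) as [F2 R2].
  unfold w in F2, R2. rewrite Z.div_mul in F2 by lia. rewrite Z.mod_mul in R2 by lia.
  fold w in F2, R2. fold k in R1.
  pose proof (Sset_bound G2 G1 D2 x (ltac:(lia)) Hx) as Hxb.
  assert (Hkb : (0 <= k < G1)%Z) by (apply Z.mod_pos_bound; lia).
  assert (Hxr : 0 <= IZR x) by (apply IZR_le; lia).
  assert (Hkr : 0 <= IZR k) by (apply IZR_le; lia).
  assert (Hxr' : IZR x < IZR G1) by (apply IZR_lt; lia).
  assert (Hkr' : IZR k < IZR G1) by (apply IZR_lt; lia).
  destruct (bezout_inv G2 G1 (ltac:(lia)) Hg') as [inv Hinv].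
  pose proof (window_half x k s Hxs) as Hwin.
  set (rt1 := m * (IZR x + IZR k) / 2).
  assert (Hq : (rt1 - 0) / m = (IZR x + IZR k) / 2) by (unfold rt1; field; lra).
  exists rt1, 0.
  split; [unfold rt1; split; nra|]. split; [split; nra|].
  rewrite R1, R2.
  replace ((rt1 - m * IZR k - (0 - m * IZR 0)) / m) with ((IZR x - IZR k) / 2) by (unfold rt1; simpl; field; lra).
  split; [lra|]. split.
  - destruct (Rle_lt_dec (IZR s / 2) ((IZR x + IZR k) / 2)) as [C|C].
    + exists (Rround ((IZR ((x * inv) mod G1) * (m * IZR G2) + 0 - rt1) / (m * IZR G1))), ((x * inv) mod G1)%Z.
      unfold alg2. cbv zeta. rewrite Hs, Hq. split; [|split].
      * intros _. exists x. split; [exact Hx|]. split; [|split; [|split; [|split]]].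
        -- intros _. replace ((IZR x + IZR k) / 2 - IZR x) with (- ((IZR x - IZR k) / 2)) by field. lra.
        -- intros Hn. exfalso. apply Hn. exists x. split; [exact Hx|].
           replace ((IZR x + IZR k) / 2 - IZR x) with (- ((IZR x - IZR k) / 2)) by field. lra.
        -- apply Z.mod_pos_bound; lia.
        -- exists inv. split; auto. apply Z.mod_mod; lia.
        -- reflexivity.
      * intros C'. lra.
      * intros [_ C']. lra.
    + exists 0%Z, 0%Z. apply alg2_iii; [lia|]. rewrite Hs, Hq. lra.
  - intros nh1 nh2 H E. injection E as E1 E2. rewrite F2 in E2.
    unfold alg2 in H. cbv zeta in H. rewrite Hs, Hq in H. destruct H as [Hi [Hii Hiii]].
    destruct (Rle_lt_dec (IZR s / 2) ((IZR x + IZR k) / 2)) as [C|C].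
    + destruct (Hi C) as [s2 [Hs2 [Hc1 [_ [_ [[inv' [Hinv' Hmd]] _]]]]]].
      assert (W : - IZR s / 2 <= (IZR x + IZR k) / 2 - IZR s2 < IZR s / 2).
      { apply Hc1. exists x. split; [exact Hx|].
        replace ((IZR x + IZR k) / 2 - IZR x) with (- ((IZR x - IZR k) / 2)) by field. lra. }
      assert (Es2 : s2 = x).
      { destruct (Z.eq_dec s2 x) as [Ee|Ee]; auto. exfalso.
        pose proof (ddot_sep G2 G1 s s2 x Hs2 Hx Ee).
        assert (IZR (s2 - x) < IZR s) by (rewrite minus_IZR; lra).
        assert (IZR (- s) < IZR (s2 - x)) by (rewrite minus_IZR, opp_IZR; lra).
        apply lt_IZR in H0. apply lt_IZR in H1. lia. }
      subst s2. apply (modinv_back G2 G1 inv' nh2 x) in Hmd; [|lia|auto].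
      rewrite E2 in Hmd. fold w in Hmd. fold k in Hmd. rewrite (Z.mod_small x) in Hmd by lia.
      apply Hxk. auto.
    + destruct (Rlt_le_dec ((IZR x + IZR k) / 2) (- IZR s / 2)) as [C'|C']; [lra|].
      destruct (Hiii (conj C' C)) as [_ Z2]. unfold n2 in E2. lia.
Qed.
End MP6.
Import MP6.
Module MP7.
Local Open Scope R_scope.

Lemma case2 m G1 G2 j s : 0 < m -> (1 < G1 < G2)%Z -> Z.gcd G1 G2 = 1%Z ->
  eucl_sigma G1 G2 j = s -> (1 <= s < G1)%Z ->
  (Z.of_nat (S (ddot G1 G2 s)) < G2)%Z ->
  goalB m G1 G2 j s (m * IZR G1 * (1 + INR (ddot G1 G2 s))).
Proof.
  intros Hm HG Hg Hs Hs1 HD.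
  assert (HG1 : 1 < IZR G1) by (apply IZR_lt; lia).
  assert (HG2 : 1 < IZR G2) by (apply IZR_lt; lia).
  assert (Hsr : 1 <= IZR s) by (apply IZR_le; lia).
  destruct (ddot_near G1 G2 s (ltac:(lia)) Hg HD) as [x [Hx [Hxk Hxs]]].
  set (D1 := ddot G1 G2 s) in *.
  set (n1 := Z.of_nat (S D1)) in *.
  set (w := (n1 * G1)%Z) in *.
  set (k := (w mod G2)%Z) in *.
  assert (HX : m * IZR G1 * (1 + INR D1) = m * IZR w).
  { unfold w, n1. rewrite mult_IZR, <- INR_IZR_INZ, S_INR. ring. }
  rewrite HX.
  destruct (fold_int_mult m G2 w Hm (ltac:(lia))) as [F2 R2].
  destruct (fold_int_mult m G1 w Hm (ltac:(lia))) as [F1 R1].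
  unfold w in F1, R1. rewrite Z.div_mul in F1 by lia. rewrite Z.mod_mul in R1 by lia.
  fold w in F1, R1. fold k in R2.
  pose proof (Sset_bound G1 G2 D1 x (ltac:(lia)) Hx) as Hxb.
  assert (Hkb : (0 <= k < G2)%Z) by (apply Z.mod_pos_bound; lia).
  assert (Hxr : 0 <= IZR x) by (apply IZR_le; lia).
  assert (Hkr : 0 <= IZR k) by (apply IZR_le; lia).
  assert (Hxr' : IZR x < IZR G2) by (apply IZR_lt; lia).
  assert (Hkr' : IZR k < IZR G2) by (apply IZR_lt; lia).
  destruct (bezout_inv G1 G2 (ltac:(lia)) Hg) as [inv Hinv].
  pose proof (window_half x k s Hxs) as Hwin.
  set (rt2 := m * (IZR x + IZR k) / 2).
  assert (Hq : (0 - rt2) / m = - ((IZR x + IZR k) / 2)) by (unfold rt2; field; lra).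
  exists 0, rt2.
  split; [split; nra|]. split; [unfold rt2; split; nra|].
  rewrite R1, R2.
  replace ((0 - m * IZR 0 - (rt2 - m * IZR k)) / m) with (- ((IZR x - IZR k) / 2)) by (unfold rt2; simpl; field; lra).
  split; [lra|]. split.
  - destruct (Rlt_le_dec (- ((IZR x + IZR k) / 2)) (- IZR s / 2)) as [C|C].
    + exists ((x * inv) mod G2)%Z, (Rround ((IZR ((x * inv) mod G2) * (m * IZR G1) + 0 - rt2) / (m * IZR G2))).
      unfold alg2. cbv zeta. rewrite Hs, Hq. split; [|split].
      * intros C'. lra.
      * intros _. exists x. split; [exact Hx|]. split; [|split; [|split; [|split]]].
        -- intros _. replace (- ((IZR x + IZR k) / 2) + IZR x) with ((IZR x - IZR k) / 2) by field. lra.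
        -- intros Hn. exfalso. apply Hn. exists x. split; [exact Hx|].
           replace (- ((IZR x + IZR k) / 2) + IZR x) with ((IZR x - IZR k) / 2) by field. lra.
        -- apply Z.mod_pos_bound; lia.
        -- exists inv. split; auto. apply Z.mod_mod; lia.
        -- reflexivity.
      * intros [C' _]. lra.
    + exists 0%Z, 0%Z. apply alg2_iii; [lia|]. rewrite Hs, Hq. lra.
  - intros nh1 nh2 H E. injection E as E1 E2. rewrite F1 in E1.
    unfold alg2 in H. cbv zeta in H. rewrite Hs, Hq in H. destruct H as [Hi [Hii Hiii]].
    destruct (Rlt_le_dec (- ((IZR x + IZR k) / 2)) (- IZR s / 2)) as [C|C].
    + destruct (Hii C) as [s1 [Hs1' [Hc1 [_ [_ [[inv' [Hinv' Hmd]] _]]]]]].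
      assert (W : - IZR s / 2 <= - ((IZR x + IZR k) / 2) + IZR s1 < IZR s / 2).
      { apply Hc1. exists x. split; [exact Hx|].
        replace (- ((IZR x + IZR k) / 2) + IZR x) with ((IZR x - IZR k) / 2) by field. lra. }
      assert (Es1 : s1 = x).
      { destruct (Z.eq_dec s1 x) as [Ee|Ee]; auto. exfalso.
        pose proof (ddot_sep G1 G2 s s1 x Hs1' Hx Ee).
        assert (IZR (s1 - x) < IZR s) by (rewrite minus_IZR; lra).
        assert (IZR (- s) < IZR (s1 - x)) by (rewrite minus_IZR, opp_IZR; lra).
        apply lt_IZR in H0. apply lt_IZR in H1. lia. }
      subst s1. apply (modinv_back G1 G2 inv' nh1 x) in Hmd; [|lia|auto].
      rewrite E1 in Hmd. fold w in Hmd. fold k in Hmd. rewrite (Z.mod_small x) in Hmd by lia.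
      apply Hxk. auto.
    + destruct (Rle_lt_dec (IZR s / 2) (- ((IZR x + IZR k) / 2))) as [C'|C']; [lra|].
      destruct (Hiii (conj C C')) as [Z1 _]. unfold n1 in E1. lia.
Qed.
End MP7.
Import MP7.
Module MP8.
Local Open Scope R_scope.

Lemma div_window d m a : 0 < m -> -(m * a) <= d < m * a -> - a <= d / m < a.
Proof.
  intros Hm [H1 H2]. split.
  - apply (Rmult_le_reg_r m); [lra|]. unfold Rdiv. rewrite Rmult_assoc, Rinv_l; lra.
  - apply (Rmult_lt_reg_r m); [lra|]. unfold Rdiv. rewrite Rmult_assoc, Rinv_l; lra.
Qed.

Lemma abs_bt x t : Rabs x <= t -> - t <= x <= t.
Proof. unfold Rabs. destruct (Rcase_abs x); lra. Qed.

End MP8.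
Import MP8.
Open Scope R_scope.

Theorem theorem4 (m : R) (G1 G2 : Z) (K j : nat) :
  0 < m -> (1 < G1 < G2)%Z -> Z.gcd G1 G2 = 1%Z ->
  (1 < eucl_sigma G1 G2 K)%Z -> eucl_sigma G1 G2 (S K) = 1%Z ->
  (1 <= j <= S K)%nat ->
  let m1 := m * IZR G1 in
  let m2 := m * IZR G2 in
  let sj := IZR (eucl_sigma G1 G2 j) in
  let X := Rmin (m2 * (1 + INR (ddot G2 G1 (eucl_sigma G1 G2 j))))
                (m1 * (1 + INR (ddot G1 G2 (eucl_sigma G1 G2 j)))) in
  (* (a) *)
  (forall N rt1 rt2 : R,
     0 <= N < X -> 0 <= rt1 < m1 -> 0 <= rt2 < m2 ->
     - sj / 2 <= ((rt1 - rem_r m1 N) - (rt2 - rem_r m2 N)) / m < sj / 2 ->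
     forall nh1 nh2, alg2 m G1 G2 j rt1 rt2 nh1 nh2 ->
       nh1 = fold_int m1 N /\ nh2 = fold_int m2 N) /\
  (* (a), "in particular" *)
  (forall tau : R, tau < m * sj / 4 ->
   forall N rt1 rt2 : R,
     0 <= N < X -> 0 <= rt1 < m1 -> 0 <= rt2 < m2 ->
     Rabs (rt1 - rem_r m1 N) <= tau -> Rabs (rt2 - rem_r m2 N) <= tau ->
     forall nh1 nh2, alg2 m G1 G2 j rt1 rt2 nh1 nh2 ->
       nh1 = fold_int m1 N /\ nh2 = fold_int m2 N) /\
  (* (b) sharpness *)
  (exists rt1 rt2 : R,
     0 <= rt1 < m1 /\ 0 <= rt2 < m2 /\
     - sj / 2 <= ((rt1 - rem_r m1 X) - (rt2 - rem_r m2 X)) / m < sj / 2 /\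
     (exists nh1 nh2, alg2 m G1 G2 j rt1 rt2 nh1 nh2) /\
     (forall nh1 nh2, alg2 m G1 G2 j rt1 rt2 nh1 nh2 ->
        (nh1, nh2) <> (fold_int m1 X, fold_int m2 X))).
Proof.
  intros Hm HG Hg HK HK1 Hj m1 m2 sj X.
  pose proof (sig_bounds G1 G2 K j HG HK HK1 Hj) as Hs1.
  unfold X, m1, m2, sj. clear X m1 m2 sj.
  remember (eucl_sigma G1 G2 j) as s eqn:Hs. symmetry in Hs.
  assert (PA : forall N rt1 rt2 : R,
     0 <= N < Rmin (m * IZR G2 * (1 + INR (ddot G2 G1 s))) (m * IZR G1 * (1 + INR (ddot G1 G2 s))) ->
     0 <= rt1 < m * IZR G1 -> 0 <= rt2 < m * IZR G2 ->
     - IZR s / 2 <= ((rt1 - rem_r (m * IZR G1) N) - (rt2 - rem_r (m * IZR G2) N)) / m < IZR s / 2 ->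
     forall nh1 nh2, alg2 m G1 G2 j rt1 rt2 nh1 nh2 ->
       nh1 = fold_int (m * IZR G1) N /\ nh2 = fold_int (m * IZR G2) N).
  { intros N rt1 rt2 [HN0 HN] Hr1 Hr2 He nh1 nh2 Halg.
    pose proof (Rmin_l (m * IZR G2 * (1 + INR (ddot G2 G1 s))) (m * IZR G1 * (1 + INR (ddot G1 G2 s)))).
    pose proof (Rmin_r (m * IZR G2 * (1 + INR (ddot G2 G1 s))) (m * IZR G1 * (1 + INR (ddot G1 G2 s)))).
    apply (partA m G1 G2 j s N rt1 rt2 nh1 nh2); auto; try lia; lra. }
  split; [exact PA|]. split.
  - intros tau Htau N rt1 rt2 HN Hr1 Hr2 Ha1 Ha2 nh1 nh2 Halg.
    apply (PA N rt1 rt2); auto.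
    replace (- IZR s / 2) with (- (IZR s / 2)) by field.
    apply div_window; auto.
    apply abs_bt in Ha1. apply abs_bt in Ha2. lra.
  - assert (HG1 : (0 < G1)%Z) by lia.
    pose proof (ddot_lt G2 G1 s (ltac:(lia))) as HD2.
    pose proof (ddot_lt G1 G2 s (ltac:(lia))) as HD1.
    unfold Rmin. destruct (Rle_dec _ _) as [C|C].
    + destruct (Z.eq_dec (Z.of_nat (S (ddot G2 G1 s))) G1) as [E|E].
      * apply (lcm_case m G1 G2 j s); auto; try lia.
        transitivity (m * IZR G2 * IZR (Z.of_nat (S (ddot G2 G1 s)))).
        -- rewrite <- INR_IZR_INZ, S_INR. ring.
        -- rewrite E, mult_IZR. ring.
      * apply (case1 m G1 G2 j s); auto; lia.
    + destruct (Z.eq_dec (Z.of_nat (S (ddot G1 G2 s))) G2) as [E|E].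
      * apply (lcm_case m G1 G2 j s); auto; try lia.
        transitivity (m * IZR G1 * IZR (Z.of_nat (S (ddot G1 G2 s)))).
        -- rewrite <- INR_IZR_INZ, S_INR. ring.
        -- rewrite E, mult_IZR. ring.
      * apply (case2 m G1 G2 j s); auto; lia.
Qed.
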